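(* Consider the production planning setting described in the context, in the non-overlapping case, with scenario set $\mathcal{U}^d$. Fix $\pmb{x}\in\mathbb{X}$ with cumulative productions $X_t=\sum_{i\in[t]}x_i$. Then the optimal value of the linear program $$\min\ \sum_{t\in[T]}\pi_t+\Gamma^d\alpha+\sum_{t\in[T]}\gamma_t$$ subject to, for all $t\in[T]$: $\pi_t\ge f_I(X_t,\widehat{D}_t)$, $\pi_t\ge f_B(X_t,\widehat{D}_t)$, $\alpha+\gamma_t\ge f_I(X_t,\widehat{D}_t-\Delta_t)-\pi_t$, $\alpha+\gamma_t\ge f_B(X_t,\widehat{D}_t+\Delta_t)-\pi_t$, $\alpha\ge 0$, $\gamma_t\ge 0$, $\pi_t$ unrestricted, equals the optimal value of the adversarial problem $\max_{\pmb{D}\in\mathcal{U}^d}\sum_{t\in[T]}\max\{f_I(X_t,D_t),f_B(X_t,D_t)\}$.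
   Context: There are $T\ge 1$ periods, $[T]=\{1,\dots,T\}$. Given are a production cost $c^P$, an inventory cost $c^I$, a backordering cost $c^B$ and a selling price $b^P$ (independent of the period), and a set $\mathbb{X}\subseteq\mathbb{R}^T_+$ of feasible production plans $\pmb{x}=(x_1,\dots,x_T)$ described by finitely many linear constraints. For a plan write $X_t=\sum_{i\in[t]}x_i$. For $t\in[T-1]$ let $f_I(X_t,D_t)=c^I(X_t-D_t)$ and $f_B(X_t,D_t)=c^B(D_t-X_t)$; for $t=T$ let $f_I(X_T,D_T)=c^I(X_T-D_T)+c^PX_T-b^PD_T$ and $f_B(X_T,D_T)=c^B(D_T-X_T)+c^PX_T-b^PX_T$. Nominal cumulative demands $\widehat{D}_t\ge 0$ satisfy $\widehat{D}_t\le\widehat{D}_{t+1}$, and deviations satisfy $0\le\Delta_t\le\widehat{D}_t$. The discrete budgeted scenario set is $\mathcal{U}^d=\{\pmb{D}\in\mathbb{R}^T: D_t\le D_{t+1}\ (t\in[T-1]),\ D_t\in[\widehat{D}_t-\Delta_t,\widehat{D}_t+\Delta_t]\ (t\in[T]),\ |\{t: D_t\ne\widehat{D}_t\}|\le\Gamma^d\}$ with integer $\Gamma^d\in\{0,\dots,T\}$. The non-overlapping case means $\widehat{D}_t+\Delta_t\le\widehat{D}_{t+1}-\Delta_{t+1}$ for all $t\in[T-1]$. *)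

(* Defs.v *)
(* R : realFieldType, periods indexed by 'I_T (period t+1 <-> ordinal t). *)
From HB Require Import structures.
From mathcomp Require Import all_boot all_order all_algebra.
Set Implicit Arguments. Unset Strict Implicit. Unset Printing Implicit Defensive.
Import Order.TTheory GRing.Theory Num.Theory.
Local Open Scope ring_scope.

Section Defs.
Variable R : realFieldType.

Definition cumprod (T : nat) (x : 'I_T -> R) (t : 'I_T) : R :=
  \sum_(i < T | (i <= t)%N) x i.

(* f_I, f_B; the last period (ordinal T-1) carries the production cost / revenue. *)
Definition fI (cP cI bP : R) (T : nat) (t : 'I_T) (X D : R) : R :=
  if val t == T.-1 then cI * (X - D) + cP * X - bP * D else cI * (X - D).

Definition fB (cP cB bP : R) (T : nat) (t : 'I_T) (X D : R) : R :=
  if val t == T.-1 then cB * (D - X) + cP * X - bP * X else cB * (D - X).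

Definition in_plans (T m : nat) (A : 'I_m -> 'I_T -> R) (b : 'I_m -> R)
  (x : 'I_T -> R) : Prop :=
  (forall t, 0 <= x t) /\ (forall k, \sum_(t < T) A k t * x t <= b k).

Definition in_Ud (T : nat) (Dhat Delta : 'I_T -> R) (Gamma : nat)
  (D : 'I_T -> R) : Prop :=
  [/\ (forall i j : 'I_T, val j = (val i).+1 -> D i <= D j),
      (forall t, Dhat t - Delta t <= D t <= Dhat t + Delta t)
    & (#|[set t | D t != Dhat t]| <= Gamma)%N].

Definition adv_obj (cP cI cB bP : R) (T : nat) (x D : 'I_T -> R) : R :=
  \sum_(t < T) Num.max (fI cP cI bP t (cumprod x t) (D t))
                       (fB cP cB bP t (cumprod x t) (D t)).

Definition lp_feasible (cP cI cB bP : R) (T : nat) (x Dhat Delta : 'I_T -> R)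
  (pi : 'I_T -> R) (alpha : R) (gamma : 'I_T -> R) : Prop :=
  0 <= alpha /\
  forall t : 'I_T,
    [/\ pi t >= fI cP cI bP t (cumprod x t) (Dhat t),
        pi t >= fB cP cB bP t (cumprod x t) (Dhat t),
        alpha + gamma t >= fI cP cI bP t (cumprod x t) (Dhat t - Delta t) - pi t,
        alpha + gamma t >= fB cP cB bP t (cumprod x t) (Dhat t + Delta t) - pi t
      & 0 <= gamma t].

Definition lp_obj (T : nat) (Gamma : nat) (pi : 'I_T -> R) (alpha : R)
  (gamma : 'I_T -> R) : R :=
  \sum_(t < T) pi t + Gamma%:R * alpha + \sum_(t < T) gamma t.

End Defs.

(* Main.v *)
Require Import Defs.
From HB Require Import structures.
From mathcomp Require Import all_boot all_order all_algebra.
From mathcomp Require Import lra.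
Import Order.TTheory GRing.Theory Num.Theory.
Local Open Scope ring_scope.

Lemma fI_anti (R : realFieldType) (cP cI bP : R) T (t : 'I_T) X D1 D2 :
  0 <= cI -> 0 <= bP -> D1 <= D2 -> fI cP cI bP t X D2 <= fI cP cI bP t X D1.
Proof.
move=> hI hb hD; rewrite /fI; case: ifP => _.
- have h1 : cI * D1 <= cI * D2 by rewrite ler_wpM2l.
  have h2 : bP * D1 <= bP * D2 by rewrite ler_wpM2l.
  rewrite !mulrBr; lra.
- have h1 : cI * D1 <= cI * D2 by rewrite ler_wpM2l.
  rewrite !mulrBr; lra.
Qed.

Lemma fB_mono (R : realFieldType) (cP cB bP : R) T (t : 'I_T) X D1 D2 :
  0 <= cB -> D1 <= D2 -> fB cP cB bP t X D1 <= fB cP cB bP t X D2.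
Proof.
move=> hB hD; have h1 : cB * D1 <= cB * D2 by rewrite ler_wpM2l.
rewrite /fB; case: ifP => _; rewrite !mulrBr; lra.
Qed.

Lemma W_split (R : realFieldType) T (a c : 'I_T -> R) (S : {set 'I_T}) :
  \sum_t (if t \in S then c t else a t) = \sum_t a t + \sum_(t in S) (c t - a t).
Proof.
rewrite [X in _ = _ + X]big_mkcond /= -big_split /=; apply: eq_bigr => t _.
by case: ifP => _; rewrite ?addr0 // addrC subrK.
Qed.
Theorem lemma2 (R : realFieldType) (T : nat) (cP cI cB bP : R)
  (m : nat) (A : 'I_m -> 'I_T -> R) (b : 'I_m -> R)
  (Dhat Delta : 'I_T -> R) (Gamma : nat) (x : 'I_T -> R) :
  (1 <= T)%N ->
  0 <= cP -> 0 <= cI -> 0 <= cB -> 0 <= bP ->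
  (forall t, 0 <= Dhat t) ->
  (forall i j : 'I_T, val j = (val i).+1 -> Dhat i <= Dhat j) ->
  (forall t, 0 <= Delta t <= Dhat t) ->
  (Gamma <= T)%N ->
  (* non-overlapping case *)
  (forall i j : 'I_T, val j = (val i).+1 -> Dhat i + Delta i <= Dhat j - Delta j) ->
  in_plans A b x ->
  exists V : R,
    [/\ (* V is the optimal value of the LP (attained minimum) *)
        (exists pi alpha gamma,
            lp_feasible cP cI cB bP x Dhat Delta pi alpha gamma /\
            lp_obj Gamma pi alpha gamma = V),
        (forall pi alpha gamma,
            lp_feasible cP cI cB bP x Dhat Delta pi alpha gamma ->
            V <= lp_obj Gamma pi alpha gamma),
        (* V is the optimal value of the adversarial problem (attained maximum) *)
        (exists D, in_Ud Dhat Delta Gamma D /\ adv_obj cP cI cB bP x D = V)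
      & (forall D, in_Ud Dhat Delta Gamma D -> adv_obj cP cI cB bP x D <= V)].
Proof.
move=> T1 hP hI hB hb hD0 hDm hDel hG hno hx.
pose a t := Num.max (fI cP cI bP t (cumprod x t) (Dhat t)) (fB cP cB bP t (cumprod x t) (Dhat t)).
pose c t := Num.max (fI cP cI bP t (cumprod x t) (Dhat t - Delta t))
                    (fB cP cB bP t (cumprod x t) (Dhat t + Delta t)).
have hc : forall t D, Dhat t - Delta t <= D <= Dhat t + Delta t ->
    Num.max (fI cP cI bP t (cumprod x t) D) (fB cP cB bP t (cumprod x t) D) <= c t.
  move=> t D /andP[h1 h2]; rewrite /c ge_max !le_max.
  apply/andP; split; apply/orP; [left; exact: fI_anti | right; exact: fB_mono].
have hac : forall t, a t <= c t.
  move=> t; apply: hc; have /andP[h1 h2] := hDel t; apply/andP; split; lra.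
pose W (U : {set 'I_T}) := \sum_t (if t \in U then c t else a t).
have hS0 : (#|(set0 : {set 'I_T})| <= Gamma)%N by rewrite cards0.
pose S := Order.arg_max (set0 : {set 'I_T}) (fun U : {set 'I_T} => (#|U| <= Gamma)%N) W.
have [hSc hSmax] : (#|S| <= Gamma)%N /\ forall S' : {set 'I_T}, (#|S'| <= Gamma)%N -> W S' <= W S.
  by rewrite /S; case: arg_maxP => //= S0 h1 h2; split => // S' /h2.
exists (W S); split.
-
  pose al := \big[Num.max/0]_(u | u \notin S) (c u - a u).
  have exch : forall t u, t \in S -> u \notin S -> c u - a u <= c t - a t.
    move=> t u ht hu.
    have hu' : u \notin S :\ t by rewrite in_setD1 (negbTE hu) andbF.
    have hcard : #|u |: (S :\ t)| = #|S|.
      by rewrite cardsU1 hu' (cardsD1 t S) ht.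
    have := hSmax (u |: (S :\ t)); rewrite hcard => /(_ hSc).
    rewrite /W !W_split big_setU1 //= (big_setD1 t ht) /=; lra.
  have al0 : 0 <= al by apply: bigmax_ge_id.
  have alS : forall t, t \in S -> al <= c t - a t.
    move=> t ht; apply: bigmax_le; first by have := hac t; lra.
    by move=> u hu; apply: exch.
  have alN : forall u, u \notin S -> c u - a u <= al.
    by move=> u hu; rewrite /al (bigD1 u hu) /= le_max lexx.
  have alZ : (#|S| < Gamma)%N -> al = 0.
    move=> hlt; apply/le_anti; rewrite al0 andbT.
    apply: bigmax_le => // u hu.
    have := hSmax (u |: S); rewrite cardsU1 hu /= add1n => /(_ hlt).
    rewrite /W !W_split big_setU1 //=; lra.
  exists a, al, (fun t => if t \in S then c t - a t - al else 0).
  split.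
    split => // t.
    have e1 : fI cP cI bP t (cumprod x t) (Dhat t - Delta t) <= c t by rewrite /c le_max lexx.
    have e2 : fB cP cB bP t (cumprod x t) (Dhat t + Delta t) <= c t by rewrite /c le_max lexx orbT.
    have e3 := alN t.
    have e4 := alS t.
    split; [by rewrite /a le_max lexx | by rewrite /a le_max lexx orbT | | | ]; case: ifP => hS.
    + lra.
    + have := e3 (negbT hS); lra.
    + lra.
    + have := e3 (negbT hS); lra.
    + have := e4 hS; lra.
    + lra.
  rewrite /lp_obj /W [RHS]W_split.
  have -> : \sum_t (if t \in S then c t - a t - al else 0) = \sum_(t in S) (c t - a t - al).
    by rewrite [RHS]big_mkcond.
  rewrite big_split /= sumrN sumr_const.
  have -> : Gamma%:R * al = #|S|%:R * al.
    case: (ltnP #|S| Gamma) => h.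
      by rewrite alZ // !mulr0.
    by have -> : Gamma = #|S| by apply/eqP; rewrite eqn_leq hSc h.
  rewrite -mulr_natl; lra.
-
  move=> p al g [hal hf].
  apply: (le_trans (y := \sum_t (if t \in S then p t + (al + g t) else p t))).
    apply: ler_sum => t _; have [f1 f2 f3 f4 f5] := hf t.
    have h1 : a t <= p t by rewrite /a ge_max f1 f2.
    have h2 : c t <= p t + (al + g t) by rewrite /c ge_max; apply/andP; split; lra.
    by case: ifP.
  rewrite W_split.
  have -> : \sum_(t in S) (p t + (al + g t) - p t) = \sum_(t in S) (al + g t).
    by apply: eq_bigr => t _; rewrite addrC addKr.
  rewrite big_split /= sumr_const /lp_obj.
  have h1 : (al *+ #|S|) <= Gamma%:R * al.
    by rewrite -[al *+ _]mulr_natl; apply: ler_wpM2r => //; rewrite ler_nat.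

  have h2 : \sum_(t in S) g t <= \sum_t g t.
    rewrite big_mkcond /=; apply: ler_sum => t _.
    by case: ifP => // _; have [_ _ _ _ ->] := hf t.
  lra.
-
  pose D t := if t \in S then
      (if fB cP cB bP t (cumprod x t) (Dhat t + Delta t) <= fI cP cI bP t (cumprod x t) (Dhat t - Delta t)
       then Dhat t - Delta t else Dhat t + Delta t) else Dhat t.
  have hDb : forall t, Dhat t - Delta t <= D t <= Dhat t + Delta t.
    move=> t; have /andP[h1 h2] := hDel t; rewrite /D.
    by case: ifP => _; [case: ifP => _|]; apply/andP; split; lra.
  exists D; split.
    split.
    + move=> i j hij; have /andP[_ h1] := hDb i; have /andP[h2 _] := hDb j.
      have := hno i j hij; lra.
    + exact: hDb.
    + apply: leq_trans hSc; apply: subset_leq_card; apply/subsetP => t.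
      rewrite inE /D; case: ifP => // _; by rewrite eqxx.
  rewrite /adv_obj /W; apply: eq_bigr => t _.
  have := hc t (D t) (hDb t).
  rewrite /D; case: ifP => // hS hle; apply/le_anti; rewrite hle /=.
  have f1 := @fI_anti R cP cI bP T t (cumprod x t) (Dhat t - Delta t) (Dhat t + Delta t) hI hb.
  have f2 := @fB_mono R cP cB bP T t (cumprod x t) (Dhat t - Delta t) (Dhat t + Delta t) hB.
  have /andP[d1 d2] := hDel t.
  have hlh : Dhat t - Delta t <= Dhat t + Delta t by lra.
  have {}f1 := f1 hlh; have {}f2 := f2 hlh.
  case: ifP => hcmp; rewrite /c ge_max !le_max.
  + by rewrite lexx /= (le_trans hcmp) ?lexx.
  + rewrite lexx orbT andbT; apply/orP; right.
    move/negbT: hcmp; rewrite -ltNge => /ltW; done.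
-
  move=> D [hm hbD hcard].
  apply: (le_trans (y := W [set t | D t != Dhat t])); last exact: hSmax.
  rewrite /adv_obj /W; apply: ler_sum => t _; rewrite inE.
  case: (eqVneq (D t) (Dhat t)) => [->|_] //=; exact: hc.
Qed.
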